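(* Let $\hat{\mathcal U}(\mathfrak L)$ (resp. $\hat{\mathcal U}(\mathfrak H)$) be the subgroup of $PSL(2,\mathfrak L)$ (resp. $PSL(2,\mathfrak H)$) consisting of the elements that fix the point $1\in\mathbf H^1_{\mathbb H}$. Then $\hat{\mathcal U}(\mathfrak L)$ is generated by $T$ and $\mathcal U(\mathfrak L)$, and $\hat{\mathcal U}(\mathfrak H)$ is generated by $T$ and $\mathcal U(\mathfrak H)$. Moreover $T$ commutes with every element of $\mathcal U(\mathfrak H)$, so that $\hat{\mathcal U}(\mathfrak L)\cong\mathbb Z/2\mathbb Z\oplus\mathcal U(\mathfrak L)$ and $\hat{\mathcal U}(\mathfrak H)\cong\mathbb Z/2\mathbb Z\oplus\mathcal U(\mathfrak H)$.
   Context: $\mathbb H$ is the real quaternions, $\mathbf H^1_{\mathbb H}=\{q\in\mathbb H:\Re q>0\}$. Quaternionic matrices act by $q\mapsto(aq+b)(cq+d)^{-1}$, modulo nonzero real scalars. $\Im\mathbb H(\mathbb Z)=\{b\mathbf i+c\mathbf j+d\mathbf k:b,c,d\in\mathbb Z\}$; $\tau_\omega(q)=q+\omega$; $T(q)=q^{-1}$ (matrix $\begin{pmatrix}0&1\\1&0\end{pmatrix}$). Lipschitz units: $\pm1,\pm\mathbf i,\pm\mathbf j,\pm\mathbf k$; Hurwitz units: these together with $\frac12(\pm1\pm\mathbf i\pm\mathbf j\pm\mathbf k)$. For a unit $u$, $D_u=\begin{pmatrix}u&0\\0&u\end{pmatrix}$ acts by $q\mapsto uqu^{-1}$. $\mathcal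 U(\mathfrak L)=\{D_u:u\text{ Lipschitz unit}\}\cong\mathbb Z/2\mathbb Z\oplus\mathbb Z/2\mathbb Z$ and $\mathcal U(\mathfrak H)=\{D_u:u\text{ Hurwitz unit}\}$ (order 12). $PSL(2,\mathfrak L)$ is generated by $T$ and the $\tau_\omega$, $\omega\in\Im\mathbb H(\mathbb Z)$; $PSL(2,\mathfrak H)$ is generated by $T$, the $\tau_\omega$ and $\mathcal U(\mathfrak H)$. *)

(* Defs.v *)
(* Real quaternions over an arbitrary real field R
   (the paper's setting is R = the reals; the statement is purely algebraic). *)
From HB Require Import structures.
From mathcomp Require Import all_boot all_order all_algebra.
Set Implicit Arguments. Unset Strict Implicit. Unset Printing Implicit Defensive.
Import Order.TTheory GRing.Theory Num.Theory.
Local Open Scope ring_scope.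

Section Quat.
Variable R : realFieldType.

Record quat := Quat { q0 : R; q1 : R; q2 : R; q3 : R }.

Definition qreal (r : R) : quat := Quat r 0 0 0.
Definition q_0 : quat := qreal 0.
Definition q_1 : quat := qreal 1.
Definition q_i : quat := Quat 0 1 0 0.
Definition q_j : quat := Quat 0 0 1 0.
Definition q_k : quat := Quat 0 0 0 1.

Definition qadd (a b : quat) : quat :=
  Quat (q0 a + q0 b) (q1 a + q1 b) (q2 a + q2 b) (q3 a + q3 b).
Definition qopp (a : quat) : quat := Quat (- q0 a) (- q1 a) (- q2 a) (- q3 a).

Definition qmul (a b : quat) : quat :=
  Quat (q0 a * q0 b - q1 a * q1 b - q2 a * q2 b - q3 a * q3 b)
       (q0 a * q1 b + q1 a * q0 b + q2 a * q3 b - q3 a * q2 b)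
       (q0 a * q2 b - q1 a * q3 b + q2 a * q0 b + q3 a * q1 b)
       (q0 a * q3 b + q1 a * q2 b - q2 a * q1 b + q3 a * q0 b).

Definition qnorm2 (a : quat) : R := q0 a ^+ 2 + q1 a ^+ 2 + q2 a ^+ 2 + q3 a ^+ 2.

(** q^{-1} = conj q / |q|^2 (and 0^{-1} = 0) *)
Definition qinv (a : quat) : quat :=
  let n := (qnorm2 a)^-1 in Quat (q0 a * n) (- q1 a * n) (- q2 a * n) (- q3 a * n).

Definition ImHZ (w : quat) : Prop :=
  exists b c d : int, w = Quat 0 b%:~R c%:~R d%:~R.

Definition lip_unit (u : quat) : Prop :=
  u = q_1 \/ u = qopp q_1 \/ u = q_i \/ u = qopp q_i \/
  u = q_j \/ u = qopp q_j \/ u = q_k \/ u = qopp q_k.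

Definition sgnh (b : bool) : R := if b then 2^-1 else - 2^-1.

Definition hur_unit (u : quat) : Prop :=
  lip_unit u \/ exists s0 s1 s2 s3 : bool, u = Quat (sgnh s0) (sgnh s1) (sgnh s2) (sgnh s3).

Record mat := Mat { ma : quat; mb : quat; mc : quat; md : quat }.

Definition mmul (M N : mat) : mat :=
  Mat (qadd (qmul (ma M) (ma N)) (qmul (mb M) (mc N)))
      (qadd (qmul (ma M) (mb N)) (qmul (mb M) (md N)))
      (qadd (qmul (mc M) (ma N)) (qmul (md M) (mc N)))
      (qadd (qmul (mc M) (mb N)) (qmul (md M) (md N))).

Definition mI : mat := Mat q_1 q_0 q_0 q_1.

Definition mscale (r : R) (M : mat) : mat :=
  Mat (qmul (qreal r) (ma M)) (qmul (qreal r) (mb M))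
      (qmul (qreal r) (mc M)) (qmul (qreal r) (md M)).

(** equality in PSL: equal modulo nonzero real scalars *)
Definition projeq (M N : mat) : Prop := exists r : R, r != 0 /\ M = mscale r N.

Definition mobius (M : mat) (q : quat) : quat :=
  qmul (qadd (qmul (ma M) q) (mb M)) (qinv (qadd (qmul (mc M) q) (md M))).

Definition fixes1 (M : mat) : Prop := mobius M q_1 = q_1.

Definition tau (w : quat) : mat := Mat q_1 w q_0 q_1.
Definition mT : mat := Mat q_0 q_1 q_1 q_0.
Definition mD (u : quat) : mat := Mat u q_0 q_0 u.

(** The subgroup (of matrices modulo real scalars) generated by a set S of
    matrices: contains the identity and S, closed under products, projective
    inverses, and under the identification modulo nonzero real scalars. *)
Inductive gen (S : mat -> Prop) : mat -> Prop :=
| gen_one : gen S mI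
| gen_base M : S M -> gen S M
| gen_mul M N : gen S M -> gen S N -> gen S (mmul M N)
| gen_inv M N : gen S M -> projeq (mmul M N) mI -> gen S N
| gen_proj M N : gen S M -> projeq M N -> gen S N.

Definition PSL_L : mat -> Prop :=
  gen (fun N => N = mT \/ exists w, ImHZ w /\ N = tau w).
Definition PSL_H : mat -> Prop :=
  gen (fun N => N = mT \/ (exists w, ImHZ w /\ N = tau w) \/
                (exists u, hur_unit u /\ N = mD u)).

Definition Uhat_L (M : mat) : Prop := PSL_L M /\ fixes1 M.
Definition Uhat_H (M : mat) : Prop := PSL_H M /\ fixes1 M.

Definition gen_TUL : mat -> Prop := gen (fun N => N = mT \/ exists u, lip_unit u /\ N = mD u).
Definition gen_TUH : mat -> Prop := gen (fun N => N = mT \/ exists u, hur_unit u /\ N = mD u).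

(** the map Z/2 (+) U -> \hat U, (e, D_u) |-> T^e D_u *)
Definition TD (e : bool) (u : quat) : mat := mmul (if e then mT else mI) (mD u).

(** (e, D_u) |-> T^e D_u is a group isomorphism Z/2 (+) U(X) -> \hat U(X),
    where U(X) = { D_u : unit u } is the group of classes of the D_u
    (group law D_u D_u' = D_{u u'}) : homomorphism, image = \hat U, trivial kernel. *)
Definition iso_Z2_plus (unit : quat -> Prop) (Uhat : mat -> Prop) : Prop :=
  (forall e u e' u', unit u -> unit u' ->
     projeq (mmul (TD e u) (TD e' u')) (TD (xorb e e') (qmul u u'))) /\
  (forall M, Uhat M <-> exists e u, unit u /\ projeq M (TD e u)) /\
  (forall e u, unit u -> projeq (TD e u) mI -> e = false /\ projeq (mD u) mI).

End Quat.

(* Main.v *)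
Require Import Defs.
From mathcomp Require Import all_boot all_order all_algebra ring lra zify.
Set Implicit Arguments. Unset Strict Implicit. Unset Printing Implicit Defensive.
Import Order.TTheory GRing.Theory Num.Theory.
Local Open Scope ring_scope.

Section S.
Variable R : realFieldType.
Local Notation quat := (quat R).
Local Notation mat := (mat R).
Local Notation q_0 := (q_0 R).
Local Notation q_1 := (q_1 R).
Local Notation mT := (mT R).
Local Notation mI := (mI R).

Definition qconj (a : quat) : quat := Quat (q0 a) (- q1 a) (- q2 a) (- q3 a).
Definition mstar (N : mat) : mat :=
  Mat (qconj (ma N)) (qconj (mc N)) (qconj (mb N)) (qconj (md N)).
Definition Ninv (N : mat) : mat :=
  Mat (qconj (md N)) (qconj (mb N)) (qconj (mc N)) (qconj (ma N)).
Definition cond (N : mat) : Prop :=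
  mmul (mstar N) (mmul mT N) = mT /\ mmul N (mmul mT (mstar N)) = mT.
Definition integ (P : quat -> Prop) (N : mat) : Prop :=
  P (ma N) /\ P (mb N) /\ P (mc N) /\ P (md N).
Definition Inv (P : quat -> Prop) (M : mat) : Prop :=
  exists s N, s != 0 /\ integ P N /\ cond N /\ M = mscale s N.
Definition ringP (P : quat -> Prop) : Prop :=
  P q_0 /\ P q_1 /\ (forall a b, P a -> P b -> P (qadd a b)) /\
  (forall a b, P a -> P b -> P (qmul a b)) /\ (forall a, P a -> P (qconj a)).

Lemma quatE (a b : quat) : q0 a = q0 b -> q1 a = q1 b -> q2 a = q2 b -> q3 a = q3 b -> a = b.
Proof. by case: a; case: b => /= ? ? ? ? ? ? ? ? -> -> -> ->. Qed.
Lemma matE (M N : mat) : ma M = ma N -> mb M = mb N -> mc M = mc N -> md M = md N -> M = N.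
Proof. by case: M; case: N => /= ? ? ? ? ? ? ? ? -> -> -> ->. Qed.

Ltac unfM := cbn [ma mb mc md mmul mscale Defs.mT Defs.mI mD tau TD mstar Ninv].
Ltac unfQ := cbn [q0 q1 q2 q3 qmul qadd qopp qreal Defs.q_1 Defs.q_0 q_i q_j q_k qconj qnorm2].
Ltac qring := apply: quatE; unfQ; ring.
Ltac mring := apply: matE; unfM; qring.
Ltac qfield := apply: quatE; unfQ; field; try done.

Lemma mmulA (A B C : mat) : mmul (mmul A B) C = mmul A (mmul B C).
Proof. mring. Qed.
Lemma mmul1l (A : mat) : mmul mI A = A. Proof. mring. Qed.
Lemma mmul1r (A : mat) : mmul A mI = A. Proof. mring. Qed.
Lemma mmul_scalel r (A B : mat) : mmul (mscale r A) B = mscale r (mmul A B). Proof. mring. Qed.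
Lemma mmul_scaler r (A B : mat) : mmul A (mscale r B) = mscale r (mmul A B). Proof. mring. Qed.
Lemma mscaleA r s (A : mat) : mscale r (mscale s A) = mscale (r * s) A. Proof. mring. Qed.
Lemma mscale1 (A : mat) : mscale 1 A = A. Proof. mring. Qed.
Lemma mstar_mul (A B : mat) : mstar (mmul A B) = mmul (mstar B) (mstar A). Proof. mring. Qed.
Lemma mTT : mmul mT mT = mI. Proof. mring. Qed.
Lemma mTTT : mmul mT (mmul mT mT) = mT. Proof. mring. Qed.

Lemma projeq_sym (M N : mat) : projeq M N -> projeq N M.
Proof.
case=> r [r0 ->]; exists r^-1; split; first by rewrite invr_eq0.
by rewrite mscaleA mulVf // mscale1.
Qed.

Lemma solve (A X : mat) r s (N : mat) : mmul A X = mI -> r != 0 ->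
  mmul (mscale r X) N = mscale s mI -> N = mscale (s / r) A.
Proof.
move=> AX r0; rewrite mmul_scalel => H.
have H2 : mmul X N = mscale (s / r) mI.
  transitivity (mscale r^-1 (mscale r (mmul X N))); first by rewrite mscaleA mulVf // mscale1.
  by rewrite H mscaleA mulrC.
by rewrite -[N]mmul1l -AX mmulA H2 mmul_scaler mmul1r.
Qed.

Lemma cond_mul (N N' : mat) : cond N -> cond N' -> cond (mmul N N').
Proof.
move=> [h1 h2] [h1' h2']; split; rewrite mstar_mul.
- have -> : mmul (mmul (mstar N') (mstar N)) (mmul mT (mmul N N')) =
            mmul (mstar N') (mmul (mmul (mstar N) (mmul mT N)) N') by rewrite !mmulA.
  by rewrite h1.
- have -> : mmul (mmul N N') (mmul mT (mmul (mstar N') (mstar N))) =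
            mmul N (mmul (mmul N' (mmul mT (mstar N'))) (mstar N)) by rewrite !mmulA.
  by rewrite h2'.
Qed.

Lemma NinvE (N : mat) : Ninv N = mmul mT (mmul (mstar N) mT). Proof. mring. Qed.
Lemma mstarNinv (N : mat) : mstar (Ninv N) = mmul mT (mmul N mT). Proof. mring. Qed.
Lemma mTTx (X : mat) : mmul mT (mmul mT X) = X. Proof. by rewrite -mmulA mTT mmul1l. Qed.

Lemma Ninv_l (N : mat) : cond N -> mmul (Ninv N) N = mI.
Proof. by move=> [h1 _]; rewrite NinvE !mmulA h1 mTT. Qed.

Lemma cond_Ninv (N : mat) : cond N -> cond (Ninv N).
Proof.
move=> [h1 h2].
have h2' (X : mat) : mmul N (mmul mT (mmul (mstar N) X)) = mmul mT X by rewrite -{2}h2 !mmulA.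
have h1' (X : mat) : mmul (mstar N) (mmul mT (mmul N X)) = mmul mT X by rewrite -{2}h1 !mmulA.
split; rewrite mstarNinv NinvE !mmulA !mTTx.
- by rewrite h2' mTTx.
- by rewrite h1' mTTx.
Qed.

Lemma Inv_gen (P : quat -> Prop) (S : mat -> Prop) : ringP P -> (forall M, S M -> Inv P M) -> forall M, gen S M -> Inv P M.
Proof.
move=> [P0 [P1 [PD [PM PC]]]] HS M; elim=> {M}.
- exists 1, mI; split; first exact: oner_neq0.
  split; first by rewrite /integ /=.
  split; last by rewrite mscale1.
  by split; mring.
- exact: HS.
- move=> M N _ [s [A [s0 [[Ia [Ib [Ic Id]]] [cA ->]]]]] _ [s' [B [s0' [[Ia' [Ib' [Ic' Id']]] [cB ->]]]]].
  exists (s * s'), (mmul A B); split; first by rewrite mulf_neq0.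
  split; first by rewrite /integ /=; split; [|split; [|split]]; apply: PD; apply: PM.
  split; first exact: cond_mul.
  by rewrite mmul_scalel mmul_scaler mscaleA.
- move=> M N _ [s [A [s0 [[Ia [Ib [Ic Id]]] [cA ->]]]]] [t [t0 H]].
  exists (t / s), (Ninv A); split; first by rewrite mulf_neq0 // invr_eq0.
  split; first by rewrite /integ /=; split; [|split; [|split]]; apply: PC.
  split; first exact: cond_Ninv.
  exact: (solve (Ninv_l cA) s0 H).
- move=> M N _ [s [A [s0 [iA [cA ->]]]]] [r [r0 H]].
  exists (r^-1 * s), A; split; first by rewrite mulf_neq0 // invr_eq0.
  split=> //; split=> //.
  by rewrite -mscaleA H mscaleA mulVf // mscale1.
Qed.

End S.

Section S2.
Variable R : realFieldType.
Local Notation quat := (quat R).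
Local Notation mat := (mat R).
Local Notation q_0 := (q_0 R).
Local Notation q_1 := (q_1 R).
Local Notation mT := (mT R).
Local Notation mI := (mI R).

Ltac unfM := cbn [ma mb mc md mmul mscale Defs.mT Defs.mI mD tau TD mstar Ninv xorb].
Ltac unfQ := cbn [q0 q1 q2 q3 qmul qadd qopp qreal Defs.q_1 Defs.q_0 q_i q_j q_k qconj qnorm2]; try rewrite /qnorm2.
Ltac qring := apply: quatE; unfQ; ring.
Ltac mring := apply: matE; unfM; qring.
Ltac qfield := apply: quatE; unfQ; field; try done.

Definition Qs (U : quat -> Prop) (M : mat) : Prop := exists e u, U u /\ projeq M (TD e u).
Definition Ugood (U : quat -> Prop) : Prop :=
  U q_1 /\ (forall u, U u -> qnorm2 u = 1) /\ (forall u v, U u -> U v -> U (qmul u v)) /\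
  (forall u, U u -> U (qconj u)).

Lemma TDE e (u : quat) : TD e u = if e then Mat q_0 u u q_0 else Mat u q_0 q_0 u.
Proof. by case: e; mring. Qed.
Lemma TD_mul e (u : quat) e' u' : mmul (TD e u) (TD e' u') = TD (xorb e e') (qmul u u').
Proof. by case: e; case: e'; mring. Qed.
Lemma TD_f1 : TD false q_1 = mI. Proof. mring. Qed.
Lemma qconj_mul (u : quat) : qmul (qconj u) u = qreal (qnorm2 u). Proof. qring. Qed.

Lemma gen_Q (U : quat -> Prop) (M : mat) : Ugood U ->
  gen (fun N => N = mT \/ exists u, U u /\ N = mD u) M -> Qs U M.
Proof.
move=> [U1 [Un [UM UC]]]; elim=> {M}.
- exists false, q_1; split=> //; exists 1; split; first exact: oner_neq0.
  by rewrite mscale1 TD_f1.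
- move=> N [->|[u [Uu ->]]].
  + exists true, q_1; split=> //; exists 1; split; first exact: oner_neq0.
    by rewrite mscale1; mring.
  + exists false, u; split=> //; exists 1; split; first exact: oner_neq0.
    by rewrite mscale1; mring.
- move=> M N _ [e [u [Uu [r [r0 ->]]]]] _ [e' [u' [Uu' [r' [r0' ->]]]]].
  exists (xorb e e'), (qmul u u'); split; first exact: UM.
  exists (r * r'); split; first by rewrite mulf_neq0.
  by rewrite mmul_scalel mmul_scaler mscaleA TD_mul.
- move=> M N _ [e [u [Uu [r [r0 ->]]]]] [t [t0 H]].
  exists e, (qconj u); split; first exact: UC.
  exists (t / r); split; first by rewrite mulf_neq0 // invr_eq0.
  apply: (solve _ r0 H).
  rewrite TD_mul Bool.xorb_nilpotent.
  by rewrite qconj_mul Un //; exact: TD_f1.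
- move=> M N _ [e [u [Uu [r [r0 ->]]]]] [r' [r0' H]].
  exists e, u; split=> //; exists (r'^-1 * r); split; first by rewrite mulf_neq0 // invr_eq0.
  by rewrite -mscaleA H mscaleA mulVf // mscale1.
Qed.

Lemma Q_gen (U : quat -> Prop) (S : mat -> Prop) (M : mat) :
  gen S mT -> (forall u, U u -> gen S (mD u)) -> Qs U M -> gen S M.
Proof.
move=> ST SD [e [u [Uu Hp]]]; apply: (gen_proj _ (projeq_sym Hp)); clear Hp.
case: e; rewrite /TD; apply: gen_mul => //; [exact: SD | exact: gen_one | exact: SD].
Qed.

Lemma qmulV (y : quat) : qnorm2 y != 0 -> qmul y (qinv y) = q_1.
Proof. move=> Hy; apply: quatE; cbn [qmul qinv q0 q1 q2 q3 Defs.q_1 qreal]; move: Hy; rewrite /qnorm2 => Hy; field; exact: Hy. Qed.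

Lemma qinvK (x y : quat) : qnorm2 y != 0 -> qmul (qmul x (qinv y)) y = x.
Proof. move=> Hy; apply: quatE; cbn [qmul qinv q0 q1 q2 q3]; move: Hy; rewrite /qnorm2 => Hy; field; exact: Hy. Qed.

Lemma qnorm2_ge0 (x : quat) : 0 <= qnorm2 x.
Proof. by rewrite /qnorm2 !addr_ge0 ?sqr_ge0. Qed.

Lemma qnorm2_eq0 (x : quat) : qnorm2 x = 0 -> x = q_0.
Proof.
rewrite /qnorm2 => H.
have h0 := sqr_ge0 (q0 x); have h1 := sqr_ge0 (q1 x); have h2 := sqr_ge0 (q2 x); have h3 := sqr_ge0 (q3 x).
apply: quatE; cbn [q0 q1 q2 q3 Defs.q_0 qreal]; apply/eqP; rewrite -sqrf_eq0; apply/eqP; lra.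
Qed.

Lemma fix_suff (M : mat) :
  qadd (qmul (ma M) q_1) (mb M) = qadd (qmul (mc M) q_1) (md M) ->
  qnorm2 (qadd (qmul (mc M) q_1) (md M)) != 0 -> fixes1 M.
Proof. by move=> H Hn; rewrite /fixes1 /mobius H qmulV. Qed.

Lemma fix_nec (M : mat) : fixes1 M ->
  qadd (qmul (ma M) q_1) (mb M) = qadd (qmul (mc M) q_1) (md M).
Proof.
rewrite /fixes1 /mobius; set x := qadd _ _; set y := qadd _ _ => H.
have [Hy|Hy] := eqVneq (qnorm2 y) 0.
  have : q0 (qmul x (qinv y)) = 0.
    by cbn [qmul qinv q0 q1 q2 q3]; rewrite Hy invr0; ring.
  by rewrite H /= => /eqP; rewrite oner_eq0.
have := qinvK x Hy; rewrite H => <-; qring.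
Qed.

Lemma Q_fix (U : quat -> Prop) (M : mat) : Ugood U -> Qs U M -> fixes1 M.
Proof.
move=> [_ [Un _]] [e [u [Uu [r [r0 ->]]]]].
have [E1 E2] : qadd (qmul (ma (mscale r (TD e u))) q_1) (mb (mscale r (TD e u))) = qmul (qreal r) u /\
  qadd (qmul (mc (mscale r (TD e u))) q_1) (md (mscale r (TD e u))) = qmul (qreal r) u.
  by case: e; split; unfM; qring.
apply: (@fix_suff (mscale r (TD e u))); first by rewrite E1 E2.
rewrite E2.
have -> : qnorm2 (qmul (qreal r) u) = r ^+ 2 * qnorm2 u.
  by rewrite /qnorm2; cbn [qmul qreal q0 q1 q2 q3]; ring.
by rewrite Un // mulr1 sqrf_eq0.
Qed.

End S2.

Section S3.
Variable R : realFieldType.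
Local Notation quat := (quat R).
Local Notation mat := (mat R).
Local Notation q_0 := (q_0 R).
Local Notation q_1 := (q_1 R).
Local Notation mT := (mT R).
Local Notation mI := (mI R).
Ltac unfM := cbn [ma mb mc md mmul mscale Defs.mT Defs.mI mD tau TD mstar Ninv xorb].
Ltac unfQ := cbn [q0 q1 q2 q3 qmul qadd qopp qreal Defs.q_1 Defs.q_0 q_i q_j q_k qconj qnorm2]; try rewrite /qnorm2.
Ltac qring := apply: quatE; unfQ; ring.
Ltac mring := apply: matE; unfM; qring.

Lemma cond1E (a b c d : quat) : mmul (mstar (Mat a b c d)) (mmul mT (Mat a b c d)) =
  Mat (qadd (qmul (qconj a) c) (qmul (qconj c) a)) (qadd (qmul (qconj a) d) (qmul (qconj c) b))
      (qadd (qmul (qconj b) c) (qmul (qconj d) a)) (qadd (qmul (qconj b) d) (qmul (qconj d) b)).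
Proof. mring. Qed.
Lemma cond2E (a b c d : quat) : mmul (Mat a b c d) (mmul mT (mstar (Mat a b c d))) =
  Mat (qadd (qmul b (qconj a)) (qmul a (qconj b))) (qadd (qmul b (qconj c)) (qmul a (qconj d)))
      (qadd (qmul d (qconj a)) (qmul c (qconj b))) (qadd (qmul d (qconj c)) (qmul c (qconj d))).
Proof. mring. Qed.

Lemma scale_cancel (s : R) (p p' : quat) : s != 0 -> qmul (qreal s) p = qmul (qreal s) p' -> p = p'.
Proof.
move=> s0 H.
have K (x : quat) : qmul (qreal s^-1) (qmul (qreal s) x) = x.
  by apply: quatE; unfQ; field.
by rewrite -(K p) H K.
Qed.

Lemma classify (P U : quat -> Prop) :
  (forall x, P x -> exists n : int, qnorm2 x = n%:~R) ->
  (forall x, P x -> qnorm2 x = 1 -> U x) ->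
  forall M, Inv P M -> fixes1 M -> Qs U M.
Proof.
move=> Pn PU M [s [[a b c d] [s0 [[Pa [Pb [Pc Pd]]] [[h1 h2] ->]]]]] /fix_nec Hf.
have Hp : qadd a b = qadd c d.
  apply: (scale_cancel s0); move: Hf; cbn [ma mb mc md mscale] => Hf.
  have L (x y : quat) : qadd (qmul (qmul (qreal s) x) q_1) (qmul (qreal s) y) = qmul (qreal s) (qadd x y) by qring.
  by rewrite -!L.
rewrite cond1E /Defs.mT in h1; rewrite cond2E /Defs.mT in h2.
have E1 := congr1 (@ma R) h1; have E2 := congr1 (@mb R) h1; have E4 := congr1 (@md R) h1.
have F1 := congr1 (@ma R) h2.
cbn [ma mb mc md] in E1; cbn [ma mb mc md] in E2; cbn [ma mb mc md] in E4; cbn [ma mb mc md] in F1; cbn [ma mb mc md] in Pa; cbn [ma mb mc md] in Pb; cbn [ma mb mc md] in Pc; cbn [ma mb mc md] in Pd.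
have p0 := congr1 (@q0 R) Hp; have p1 := congr1 (@q1 R) Hp.
have p2 := congr1 (@q2 R) Hp; have p3 := congr1 (@q3 R) Hp.
have f1 := congr1 (@q0 R) E1; have f2 := congr1 (@q0 R) E2.
have f4 := congr1 (@q0 R) E4; have g1 := congr1 (@q0 R) F1.
cbn [q0 q1 q2 q3 qmul qadd qconj Defs.q_0 Defs.q_1 qreal] in p0; cbn [q0 q1 q2 q3 qmul qadd qconj Defs.q_0 Defs.q_1 qreal] in p1; cbn [q0 q1 q2 q3 qmul qadd qconj Defs.q_0 Defs.q_1 qreal] in p2; cbn [q0 q1 q2 q3 qmul qadd qconj Defs.q_0 Defs.q_1 qreal] in p3; cbn [q0 q1 q2 q3 qmul qadd qconj Defs.q_0 Defs.q_1 qreal] in f1; cbn [q0 q1 q2 q3 qmul qadd qconj Defs.q_0 Defs.q_1 qreal] in f2; cbn [q0 q1 q2 q3 qmul qadd qconj Defs.q_0 Defs.q_1 qreal] in f4; cbn [q0 q1 q2 q3 qmul qadd qconj Defs.q_0 Defs.q_1 qreal] in g1.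
have N1 : qnorm2 a + qnorm2 b = 1.
  have d0 : q0 d = q0 a + q0 b - q0 c by lra.
  have d1 : q1 d = q1 a + q1 b - q1 c by lra.
  have d2 : q2 d = q2 a + q2 b - q2 c by lra.
  have d3 : q3 d = q3 a + q3 b - q3 c by lra.
  rewrite d0 d1 d2 d3 in f2 f4; rewrite /qnorm2; lra.
have [n En] := Pn a Pa; have [m Em] := Pn b Pb.
have n0 : (0 <= n)%R by rewrite -(ler0z R) -En qnorm2_ge0.
have m0 : (0 <= m)%R by rewrite -(ler0z R) -Em qnorm2_ge0.
have nm : (n + m = 1)%R.
  by apply/eqP; rewrite -(eqr_int R) intrD -En -Em N1.
have [[n0' m1]|[n1 m0']] : (n = 0 /\ m = 1)%R \/ (n = 1 /\ m = 0)%R by lia.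
-
  have a0 : a = q_0 by apply: qnorm2_eq0; rewrite En n0'.
  have Nb : qnorm2 b = 1 by rewrite Em m1.
  subst a.
  have cb : qmul (qconj c) b = q_1.
    by rewrite -E2; qring.
  have e1 : qmul (qmul (qconj c) b) (qconj b) = qmul (qconj c) (qreal (qnorm2 b)) by qring.
  rewrite cb Nb in e1.
  have cc : qconj c = qconj b.
    transitivity (qmul (qconj c) (qreal 1)); first by qring.
    by rewrite -e1; qring.
  have cbE : c = b.
    transitivity (qconj (qconj c)); first by qring.
    by rewrite cc; qring.
  subst c.
  have d0 : d = q_0.
    apply: quatE; cbn [Defs.q_0 qreal q0 q1 q2 q3] in p0; cbn [Defs.q_0 qreal q0 q1 q2 q3] in p1; cbn [Defs.q_0 qreal q0 q1 q2 q3] in p2; cbn [Defs.q_0 qreal q0 q1 q2 q3] in p3; cbn [Defs.q_0 qreal q0 q1 q2 q3]; lra.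
  subst d.
  exists true, b; split; first exact: PU.
  by exists s; split=> //; rewrite TDE.
-
  have b0 : b = q_0 by apply: qnorm2_eq0; rewrite Em m0'.
  have Na : qnorm2 a = 1 by rewrite En n1.
  subst b.
  have ad : qmul (qconj a) d = q_1.
    by rewrite -E2; qring.
  have e1 : qmul a (qmul (qconj a) d) = qmul (qreal (qnorm2 a)) d by qring.
  rewrite ad Na in e1.
  have daE : d = a.
    transitivity (qmul (qreal 1) d); first by qring.
    by rewrite -e1; qring.
  subst d.
  have c0 : c = q_0.
    apply: quatE; cbn [Defs.q_0 qreal q0 q1 q2 q3] in p0; cbn [Defs.q_0 qreal q0 q1 q2 q3] in p1; cbn [Defs.q_0 qreal q0 q1 q2 q3] in p2; cbn [Defs.q_0 qreal q0 q1 q2 q3] in p3; cbn [Defs.q_0 qreal q0 q1 q2 q3]; lra.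
  subst c.
  exists false, a; split; first exact: PU.
  by exists s; split=> //; rewrite TDE.
Qed.

End S3.

Section S4.
Variable R : realFieldType.
Local Notation quat := (quat R).
Local Notation mat := (mat R).
Local Notation q_0 := (q_0 R).
Local Notation q_1 := (q_1 R).
Local Notation mT := (mT R).
Local Notation mI := (mI R).
Ltac unfM := cbn [ma mb mc md mmul mscale Defs.mT Defs.mI mD tau TD mstar Ninv xorb].
Ltac unfQ := try rewrite /qnorm2; cbn [q0 q1 q2 q3 qmul qadd qopp qreal Defs.q_1 Defs.q_0 q_i q_j q_k qconj qnorm2].
Ltac qring := apply: quatE; unfQ; ring.
Ltac mring := apply: matE; unfM; qring.
Ltac qfield := apply: quatE; unfQ; field; try done.

Definition lipZ (x : quat) : Prop :=
  exists z0 z1 z2 z3 : int, x = Quat z0%:~R z1%:~R z2%:~R z3%:~R.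
Definition hb (m0 m1 m2 m3 : int) : quat :=
  Quat (m0%:~R / 2) (m0%:~R / 2 + m1%:~R) (m0%:~R / 2 + m2%:~R) (m0%:~R / 2 + m3%:~R).
Definition hurZ (x : quat) : Prop := exists m0 m1 m2 m3 : int, x = hb m0 m1 m2 m3.

Lemma ringP_lip : ringP lipZ.
Proof.
split; first by exists 0, 0, 0, 0; qring.
split; first by exists 1, 0, 0, 0; qring.
split; first by move=> a b [z0 [z1 [z2 [z3 ->]]]] [w0 [w1 [w2 [w3 ->]]]];
  exists (z0 + w0), (z1 + w1), (z2 + w2), (z3 + w3); qring.
split; first by move=> a b [z0 [z1 [z2 [z3 ->]]]] [w0 [w1 [w2 [w3 ->]]]];
  exists (z0 * w0 - z1 * w1 - z2 * w2 - z3 * w3), (z0 * w1 + z1 * w0 + z2 * w3 - z3 * w2),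
    (z0 * w2 - z1 * w3 + z2 * w0 + z3 * w1), (z0 * w3 + z1 * w2 - z2 * w1 + z3 * w0); qring.
by move=> a [z0 [z1 [z2 [z3 ->]]]]; exists z0, (- z1), (- z2), (- z3); qring.
Qed.

Lemma ringP_hur : ringP hurZ.
Proof.
split; first by exists 0, 0, 0, 0; rewrite /hb; qfield.
split; first by exists 2, (-1), (-1), (-1); rewrite /hb; qfield.
split; first by move=> a b [m0 [m1 [m2 [m3 ->]]]] [n0 [n1 [n2 [n3 ->]]]];
  exists (m0 + n0), (m1 + n1), (m2 + n2), (m3 + n3); rewrite /hb; qfield.
split; first by move=> a b [m0 [m1 [m2 [m3 ->]]]] [n0 [n1 [n2 [n3 ->]]]];
  exists (((-1) * m0 * n0 + (-1) * m0 * n1 + (-1) * m0 * n2 + (-1) * m0 * n3 + (-1) * m1 * n0 + (-2) * m1 * n1 + (-1) * m2 * n0 + (-2) * m2 * n2 + (-1) * m3 * n0 + (-2) * m3 * n3) : int),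
   ((m0 * n0 + m0 * n1 + m0 * n3 + m1 * n0 + m1 * n1 + m2 * n0 + m2 * n2 + m2 * n3 + (-1) * m3 * n2 + m3 * n3) : int),
   ((m0 * n0 + m0 * n1 + m0 * n2 + m1 * n1 + (-1) * m1 * n3 + m2 * n0 + m2 * n2 + m3 * n0 + m3 * n1 + m3 * n3) : int),
   ((m0 * n0 + m0 * n2 + m0 * n3 + m1 * n0 + m1 * n1 + m1 * n2 + (-1) * m2 * n1 + m2 * n2 + m3 * n0 + m3 * n3) : int);
  rewrite /hb; qfield.
by move=> a [m0 [m1 [m2 [m3 ->]]]]; exists m0, (- m0 - m1), (- m0 - m2), (- m0 - m3); rewrite /hb; qfield.
Qed.

Lemma norm_lip (x : quat) : lipZ x -> exists n : int, qnorm2 x = n%:~R.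
Proof.
move=> [z0 [z1 [z2 [z3 ->]]]]; exists (z0 ^+ 2 + z1 ^+ 2 + z2 ^+ 2 + z3 ^+ 2).
rewrite /qnorm2 /=; ring.
Qed.

Lemma norm_hur (x : quat) : hurZ x -> exists n : int, qnorm2 x = n%:~R.
Proof.
move=> [m0 [m1 [m2 [m3 ->]]]].
exists (m0 * m0 + m0 * (m1 + m2 + m3) + m1 * m1 + m2 * m2 + m3 * m3).
rewrite /qnorm2 /hb /=; field; done.
Qed.

Lemma lip_hur (x : quat) : lipZ x -> hurZ x.
Proof.
move=> [z0 [z1 [z2 [z3 ->]]]]; exists (2 * z0), (z1 - z0), (z2 - z0), (z3 - z0).
rewrite /hb; qfield.
Qed.

Ltac pick := repeat (first [ left; solve [qring] | right ]); solve [qring].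

Lemma lip_int (z0 z1 z2 z3 : int) :
  (z0 * z0 + z1 * z1 + z2 * z2 + z3 * z3 = 1)%R ->
  lip_unit (Quat (z0%:~R : R) z1%:~R z2%:~R z3%:~R).
Proof.
move=> H.
have b0 : (-1 <= z0 <= 1)%R by nia.
have b1 : (-1 <= z1 <= 1)%R by nia.
have b2 : (-1 <= z2 <= 1)%R by nia.
have b3 : (-1 <= z3 <= 1)%R by nia.
have c0 : (z0 = 0 \/ z0 = 1 \/ z0 = -1)%R by lia.
have c1 : (z1 = 0 \/ z1 = 1 \/ z1 = -1)%R by lia.
have c2 : (z2 = 0 \/ z2 = 1 \/ z2 = -1)%R by lia.
have c3 : (z3 = 0 \/ z3 = 1 \/ z3 = -1)%R by lia.
clear b0 b1 b2 b3; move: H.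
case: c0 => [->|[->|->]]; case: c1 => [->|[->|->]]; case: c2 => [->|[->|->]];
case: c3 => [->|[->|->]]; move=> H; rewrite /lip_unit; (try (exfalso; lia)); pick.
Qed.

Lemma lip_unitE (u : quat) : lip_unit u <-> lipZ u /\ qnorm2 u = 1.
Proof.
split.
- rewrite /lip_unit; move=> [->|[->|[->|[->|[->|[->|[->|->]]]]]]]; (split; [|by unfQ; ring]).
  + by exists 1, 0, 0, 0; qring.
  + by exists (-1), 0, 0, 0; qring.
  + by exists 0, 1, 0, 0; qring.
  + by exists 0, (-1), 0, 0; qring.
  + by exists 0, 0, 1, 0; qring.
  + by exists 0, 0, (-1), 0; qring.
  + by exists 0, 0, 0, 1; qring.
  + by exists 0, 0, 0, (-1); qring.
- move=> [[z0 [z1 [z2 [z3 ->]]]] Hn]; apply: lip_int.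
  have E : (((z0 * z0 + z1 * z1 + z2 * z2 + z3 * z3)%R)%:~R : R) = 1.
    by rewrite -[X in _ = X]Hn /qnorm2 /=; ring.
  by apply/eqP; rewrite -(eqr_int R) E.
Qed.

Lemma sgnh2 (s : bool) : sgnh R s ^+ 2 = 4^-1.
Proof. by case: s; rewrite /sgnh; field. Qed.

Definition ih (b : bool) : int := if b then 1 else 0.

Lemma sgnh_ih (s : bool) : sgnh R s = (2 * ih s - 1)%:~R / 2.
Proof. by case: s; rewrite /sgnh /ih; field. Qed.

Lemma sgn_pick (t : int) : (t = 0 \/ t = -1)%R -> exists s, (2 * t + 1)%:~R / 2 = sgnh R s.
Proof. by case=> ->; [exists true | exists false]; rewrite /sgnh; field. Qed.

Lemma tt_ge0 (t : int) : (0 <= t * t + t)%R.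
Proof. have [h|h] : (0 <= t \/ t <= -1)%R by lia. all: nia. Qed.

Lemma tt_eq0 (t : int) : (t * t + t = 0)%R -> (t = 0 \/ t = -1)%R.
Proof. move=> H; have [h|h] : (0 <= t \/ t <= -1)%R by lia. all: nia. Qed.

Lemma hur_unitE (u : quat) : hur_unit u <-> hurZ u /\ qnorm2 u = 1.
Proof.
split.
- case=> [/lip_unitE [Hl Hn]|[s0 [s1 [s2 [s3 ->]]]]]; first by split=> //; exact: lip_hur.
  split.
  + exists (2 * ih s0 - 1), (ih s1 - ih s0), (ih s2 - ih s0), (ih s3 - ih s0).
    rewrite /hb; apply: quatE; cbn [q0 q1 q2 q3]; rewrite !sgnh_ih; field; done.
  + by rewrite /qnorm2 /= !sgnh2; field.
- move=> [[m0 [m1 [m2 [m3 ->]]]] Hn].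
  have HN : (m0 * m0 + m0 * (m1 + m2 + m3) + m1 * m1 + m2 * m2 + m3 * m3 = 1)%R.
    have E : (((m0 * m0 + m0 * (m1 + m2 + m3) + m1 * m1 + m2 * m2 + m3 * m3)%R)%:~R : R) = 1.
      by rewrite -[X in _ = X]Hn /qnorm2 /hb /=; field.
    by apply/eqP; rewrite -(eqr_int R) E.
  set k := (m0 %/ 2)%Z.
  have [ev|od] : (m0 = 2 * k \/ m0 = 2 * k + 1)%R by rewrite /k; lia.
  + left; apply/lip_unitE; rewrite -lip_unitE.
    have -> : hb m0 m1 m2 m3 = Quat k%:~R (k + m1)%:~R (k + m2)%:~R (k + m3)%:~R.
      by rewrite /hb ev; qfield.
    apply: lip_int; nia.
  + right.
    have h0 := tt_ge0 k; have h1 := tt_ge0 (k + m1).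
    have h2 := tt_ge0 (k + m2); have h3 := tt_ge0 (k + m3).
    have S : ((k * k + k) + ((k + m1) * (k + m1) + (k + m1)) + ((k + m2) * (k + m2) + (k + m2))
              + ((k + m3) * (k + m3) + (k + m3)) = 0)%R by nia.
    have t0 : (k * k + k = 0)%R by lia.
    have t1 : ((k + m1) * (k + m1) + (k + m1) = 0)%R by lia.
    have t2 : ((k + m2) * (k + m2) + (k + m2) = 0)%R by lia.
    have t3 : ((k + m3) * (k + m3) + (k + m3) = 0)%R by lia.
    have [s0 e0] := @sgn_pick k (tt_eq0 t0).
    have [s1 e1] := @sgn_pick (k + m1) (tt_eq0 t1).
    have [s2 e2] := @sgn_pick (k + m2) (tt_eq0 t2).
    have [s3 e3] := @sgn_pick (k + m3) (tt_eq0 t3).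
    exists s0, s1, s2, s3; rewrite -e0 -e1 -e2 -e3 /hb od; qfield.
Qed.

End S4.

Section S5.
Variable R : realFieldType.
Local Notation quat := (quat R).
Local Notation mat := (mat R).
Local Notation q_0 := (q_0 R).
Local Notation q_1 := (q_1 R).
Local Notation mT := (mT R).
Local Notation mI := (mI R).
Ltac unfM := cbn [ma mb mc md mmul mscale Defs.mT Defs.mI mD tau TD mstar Ninv xorb].
Ltac unfQ := try rewrite /qnorm2; cbn [q0 q1 q2 q3 qmul qadd qopp qreal Defs.q_1 Defs.q_0 q_i q_j q_k qconj qnorm2].
Ltac qring := apply: quatE; unfQ; ring.
Ltac mring := apply: matE; unfM; qring.

Lemma Ugood_of (P U : quat -> Prop) : ringP P -> (forall u, U u <-> P u /\ qnorm2 u = 1) -> Ugood U.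
Proof.
move=> [P0 [P1 [PD [PM PC]]]] HU.
split; first by apply/HU; split=> //; unfQ; ring.
split; first by move=> u /HU [].
split.
- move=> u v /HU [Pu Nu] /HU [Pv Nv]; apply/HU; split; first exact: PM.
  have -> : qnorm2 (qmul u v) = qnorm2 u * qnorm2 v by rewrite /qnorm2 /=; ring.
  by rewrite Nu Nv mulr1.
- move=> u /HU [Pu Nu]; apply/HU; split; first exact: PC.
  by rewrite -Nu /qnorm2 /=; ring.
Qed.

Lemma Inv_T (P : quat -> Prop) : ringP P -> Inv P mT.
Proof.
move=> [P0 [P1 _]]; exists 1, mT; split; first exact: oner_neq0.
split; first by rewrite /integ /=; repeat split.
by split; [split; mring | rewrite mscale1].
Qed.

Lemma Inv_tau (P : quat -> Prop) (w : quat) : P w -> ringP P -> ImHZ w -> Inv P (tau w).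
Proof.
move=> Pw [P0 [P1 _]] [b [c [d Hw]]]; subst w; exists 1, (tau (Quat 0 b%:~R c%:~R d%:~R)).
split; first exact: oner_neq0.
split; first by rewrite /integ /=; repeat split.
by split; [split; mring | rewrite mscale1].
Qed.

Lemma Inv_D (P : quat -> Prop) (u : quat) : P u -> qnorm2 u = 1 -> ringP P -> Inv P (mD u).
Proof.
move=> Pu Nu [P0 [P1 _]]; exists 1, (mD u).
split; first exact: oner_neq0.
split; first by rewrite /integ /=; repeat split.
split; last by rewrite mscale1.
split.
- have -> : mmul (mstar (mD u)) (mmul mT (mD u)) = mscale (qnorm2 u) mT by mring.
  by rewrite Nu mscale1.
- have -> : mmul (mD u) (mmul mT (mstar (mD u))) = mscale (qnorm2 u) mT by mring.
  by rewrite Nu mscale1.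
Qed.

Lemma ImHZ_lip (w : quat) : ImHZ w -> @lipZ R w.
Proof. by move=> [b [c [d ->]]]; exists 0, b, c, d; qring. Qed.

Lemma PSL_L_Inv (M : mat) : PSL_L M -> Inv (@lipZ R) M.
Proof.
apply: Inv_gen; first exact: (@ringP_lip R).
move=> N [->|[w [Hw ->]]]; first exact: (Inv_T (@ringP_lip R)).
exact: (Inv_tau (ImHZ_lip Hw) (@ringP_lip R)).
Qed.

Lemma PSL_H_Inv (M : mat) : PSL_H M -> Inv (@hurZ R) M.
Proof.
apply: Inv_gen; first exact: (@ringP_hur R).
move=> N [->|[[w [Hw ->]]|[u [Hu ->]]]]; first exact: (Inv_T (@ringP_hur R)).
- exact: (Inv_tau (lip_hur (ImHZ_lip Hw)) (@ringP_hur R)).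
- by move/hur_unitE: Hu => [Pu Nu]; exact: (Inv_D Pu Nu (@ringP_hur R)).
Qed.

Lemma word_D (w : quat) : ImHZ w -> qmul w w = qopp q_1 ->
  PSL_L (mmul (mmul (mmul mT (tau w)) (mmul mT (tau w))) (mmul mT (tau w))).
Proof.
move=> Hw _.
have X : PSL_L (mmul mT (tau w)).
  by apply: gen_mul; apply: gen_base; [left | right; exists w].
by do 2 apply: gen_mul => //.
Qed.

Lemma D_PSL_L (u : quat) : lip_unit u -> PSL_L (mD u).
Proof.
have Dw (w : quat) (r : R) : r != 0 -> ImHZ w -> qmul w w = qopp q_1 ->
    mmul (mmul (mmul mT (tau w)) (mmul mT (tau w))) (mmul mT (tau w)) = mD w ->
    PSL_L (mscale r (mD w)).
  move=> r0 Hw Hww HE; apply: (gen_proj (word_D Hw Hww)).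
  exists r^-1; split; first by rewrite invr_eq0.
  by rewrite HE mscaleA mulVf // mscale1.
have m10 : (-1 : R) != 0 by rewrite oppr_eq0 oner_eq0.
have i1 : ImHZ (q_i R) by exists 1, 0, 0; qring.
have j1 : ImHZ (q_j R) by exists 0, 1, 0; qring.
have k1 : ImHZ (q_k R) by exists 0, 0, 1; qring.
have ii : qmul (q_i R) (q_i R) = qopp q_1 by qring.
have iE : mmul (mmul (mmul mT (tau (q_i R))) (mmul mT (tau (q_i R)))) (mmul mT (tau (q_i R))) = mD (q_i R) by mring.
have jE : mmul (mmul (mmul mT (tau (q_j R))) (mmul mT (tau (q_j R)))) (mmul mT (tau (q_j R))) = mD (q_j R) by mring.
have kE : mmul (mmul (mmul mT (tau (q_k R))) (mmul mT (tau (q_k R)))) (mmul mT (tau (q_k R))) = mD (q_k R) by mring.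
have jj : qmul (q_j R) (q_j R) = qopp q_1 by qring.
have kk : qmul (q_k R) (q_k R) = qopp q_1 by qring.
move=> [->|[->|[->|[->|[->|[->|[->|->]]]]]]].
- apply: (gen_proj (gen_one _)); exists 1; split; first exact: oner_neq0.
  by rewrite mscale1; mring.
- apply: (gen_proj (gen_one _)); exists (-1); split=> //; mring.
- by have := Dw _ 1 (oner_neq0 _) i1 ii iE; rewrite mscale1.
- have -> : mD (qopp (q_i R)) = mscale (-1) (mD (q_i R)) by mring.
  exact: (Dw _ _ m10 i1 ii iE).
- by have := Dw _ 1 (oner_neq0 _) j1 jj jE; rewrite mscale1.
- have -> : mD (qopp (q_j R)) = mscale (-1) (mD (q_j R)) by mring.
  exact: (Dw _ _ m10 j1 jj jE).
- by have := Dw _ 1 (oner_neq0 _) k1 kk kE; rewrite mscale1.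
- have -> : mD (qopp (q_k R)) = mscale (-1) (mD (q_k R)) by mring.
  exact: (Dw _ _ m10 k1 kk kE).
Qed.

Lemma lip_good : Ugood (@lip_unit R).
Proof. exact: (Ugood_of (@ringP_lip R) (fun u => @lip_unitE R u)). Qed.
Lemma hur_good : Ugood (@hur_unit R).
Proof. exact: (Ugood_of (@ringP_hur R) (fun u => @hur_unitE R u)). Qed.

Lemma UhatL_Q (M : mat) : Uhat_L M <-> Qs (@lip_unit R) M.
Proof.
split.
- move=> [HP Hf]; apply: (classify (@norm_lip R) _ (PSL_L_Inv HP) Hf).
  by move=> x Px Nx; apply/lip_unitE.
- move=> HQ; split; last exact: (Q_fix lip_good HQ).
  apply: (Q_gen _ _ HQ); first by apply: gen_base; left.
  exact: D_PSL_L.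
Qed.

Lemma UhatH_Q (M : mat) : Uhat_H M <-> Qs (@hur_unit R) M.
Proof.
split.
- move=> [HP Hf]; apply: (classify (@norm_hur R) _ (PSL_H_Inv HP) Hf).
  by move=> x Px Nx; apply/hur_unitE.
- move=> HQ; split; last exact: (Q_fix hur_good HQ).
  apply: (Q_gen _ _ HQ); first by apply: gen_base; left.
  by move=> u Hu; apply: gen_base; right; right; exists u.
Qed.

Lemma genL_Q (M : mat) : gen_TUL M <-> Qs (@lip_unit R) M.
Proof.
split; first exact: (gen_Q lip_good).
move=> HQ; apply: (Q_gen _ _ HQ); first by apply: gen_base; left.
by move=> u Hu; apply: gen_base; right; exists u.
Qed.

Lemma genH_Q (M : mat) : gen_TUH M <-> Qs (@hur_unit R) M.
Proof.
split; first exact: (gen_Q hur_good).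
move=> HQ; apply: (Q_gen _ _ HQ); first by apply: gen_base; left.
by move=> u Hu; apply: gen_base; right; exists u.
Qed.

Lemma iso_part (U : quat -> Prop) (Uhat : mat -> Prop) :
  (forall M, Uhat M <-> Qs U M) -> iso_Z2_plus U Uhat.
Proof.
move=> HU; split.
  by move=> e u e' u' _ _; exists 1; split; [exact: oner_neq0 | rewrite mscale1 TD_mul].
split; first by move=> M; rewrite HU.
move=> e u _ [r [r0 H]]; case: e H => H.
- exfalso; have := congr1 (fun M => q0 (ma M)) H; rewrite TDE.
  cbn [ma mscale Defs.mI q0 qmul qreal Defs.q_1 Defs.q_0] => E.
  have : r = 0 by move: E; rewrite /=; lra.
  by move/eqP; rewrite (negbTE r0).
- split=> //; exists r; split=> //.
  by move: H; rewrite /TD mmul1l.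
Qed.

Theorem mainTheorem5' :
  (forall M : mat, Uhat_L M <-> gen_TUL M) /\
  (forall M : mat, Uhat_H M <-> gen_TUH M) /\
  (forall u : quat, hur_unit u -> mmul mT (mD u) = mmul (mD u) mT) /\
  iso_Z2_plus (@lip_unit R) (@Uhat_L R) /\
  iso_Z2_plus (@hur_unit R) (@Uhat_H R).
Proof.
split; first by move=> M; rewrite UhatL_Q genL_Q.
split; first by move=> M; rewrite UhatH_Q genH_Q.
split; first by move=> u _; mring.
split; apply: iso_part; [exact: UhatL_Q | exact: UhatH_Q].
Qed.
End S5.


Theorem mainTheorem5 (R : realFieldType) :
  (forall M : mat R, Uhat_L M <-> gen_TUL M) /\
  (forall M : mat R, Uhat_H M <-> gen_TUH M) /\
  (forall u : quat R, hur_unit u -> mmul (mT R) (mD u) = mmul (mD u) (mT R)) /\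
  iso_Z2_plus (@lip_unit R) (@Uhat_L R) /\
  iso_Z2_plus (@hur_unit R) (@Uhat_H R).
Proof. exact: mainTheorem5'. Qed.
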